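(* Let $\mathscr T=(V,\mathcal E)$ be the directed Cartesian product of locally finite, rooted directed trees $\mathscr T_1,\dots,\mathscr T_d$, and let $S_{\boldsymbol\lambda}=(S_1,\dots,S_d)$ be a commuting multishift on $\mathscr T$. Let $E=\bigcap_{j=1}^d\ker S_j^*$ be the joint kernel of $S_{\boldsymbol\lambda}^*$. Then $S_{\boldsymbol\lambda}$ possesses the wandering subspace property, i.e. $$l^2(V)=\bigvee_{\alpha\in\mathbb N^d}S_{\boldsymbol\lambda}^{\alpha}E ,$$ where $\bigvee$ denotes the closed linear span.
   Context: A directed tree is a directed graph $(V,\mathcal E)$ ($\mathcal E\subseteq V\times V$ with no loops) that has no circuits, is connected (any two distinct vertices are joined by a path when orientation is ignored), and in which each vertex having an incoming edge has exactly one (its parent $\mathsf{par}(v)$). It is rooted if it has a (unique) vertex $\mathsf{root}$ with no incoming edge. $\mathsf{Chi}(u)=\{v:(u,v)\in\mathcal E\}$. The tree is locally finite if each $\mathsf{Chi}(u)$ is finite. Standing assumption: all directed trees are leafless (every $\mathsf{Chi}(u)\ne\emptyset$). Given rooted directed trees $\mathscr T_j=(V_j,\mathcal E_j)$ with roots $\mathsf{root}_j$, their directed Cartesian product is $\mathscr T=(V,\mathcal E)$ with $V=V_1\times\dots\times V_d$ (assumed countably infinite) and $(v,w)\in\mathcal E$ iff for some $k$, $(v_k,w_k)\in\mathcal E_k$ and $w_j=v_j$ for $j\ne k$. Put $\mathsf{root}=(\mathsf{root}_1,\dots,\mathsf{root}_d)$, $V^\circ=V\setminus\{\mathsf{root}\}$,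 $\mathsf{Chi}_j(v)=\{w\in V: w_j\in\mathsf{Chi}(v_j),\ w_k=v_k\ (k\neq j)\}$, and for $v_j\ne\mathsf{root}_j$ let $\mathsf{par}_j(v)$ be $v$ with $v_j$ replaced by $\mathsf{par}(v_j)$. $l^2(V)$ has orthonormal basis $\{e_v\}_{v\in V}$. Given positive numbers $\{\lambda^{(j)}_v: v\in V^\circ,1\le j\le d\}$, the multishift $S_{\boldsymbol\lambda}=(S_1,\dots,S_d)$ is $(S_jf)(v)=\lambda^{(j)}_vf(\mathsf{par}_j(v))$ if $v_j\ne\mathsf{root}_j$ and $0$ otherwise; each $S_j$ is assumed bounded on $l^2(V)$, so $S_je_v=\sum_{w\in\mathsf{Chi}_j(v)}\lambda^{(j)}_we_w$. Commuting means $S_iS_j=S_jS_i$ for all $i,j$; $S^\alpha_{\boldsymbol\lambda}=S_1^{\alpha_1}\cdots S_d^{\alpha_d}$. *)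

(* Defs.v *)
From Stdlib Require Import Relations ClassicalEpsilon.
From HB Require Import structures.
From mathcomp Require Import all_boot all_order all_algebra.
From mathcomp Require Import all_classical all_reals all_analysis.
From mathcomp Require Import complex.
Set Implicit Arguments. Unset Strict Implicit. Unset Printing Implicit Defensive.
Import Order.TTheory GRing.Theory Num.Theory.
Local Open Scope classical_set_scope.
Local Open Scope ring_scope.

Section Trees.
Variables (T : Type) (E : T -> T -> Prop).

Definition undirected_edge (u v : T) : Prop := E u v \/ E v u.

Definition rooted_directed_tree (rt : T) : Prop :=
  [/\ (forall v, ~ E v v),
      (forall v, ~ clos_trans T E v v),
      (forall u v, u <> v -> clos_refl_trans T undirected_edge u v),
      (forall u v w, E u w -> E v w -> u = v)
    & (forall u, ~ E u rt)].

Definition Chi (u : T) : set T := [set v | E u v].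
Definition locally_finite : Prop := forall u, finite_set (Chi u).
Definition leafless : Prop := forall u, Chi u !=set0.

(* the parent of a vertex (meaningful when it has an incoming edge) *)
Definition par (rt : T) (u : T) : T :=
  epsilon (inhabits rt) (fun p => E p u).
End Trees.

Definition Vtx (d : nat) (T : 'I_d -> Type) := forall j : 'I_d, T j.
HB.instance Definition _ d T := gen_eqMixin (@Vtx d T).
HB.instance Definition _ d T := gen_choiceMixin (@Vtx d T).

Section Multishift.
Variable R : realType.
Local Notation C := R[i].
Variables (d : nat) (T : 'I_d -> Type) (E : forall j, T j -> T j -> Prop)
          (root : forall j, T j).

Local Notation Vtx := (@Vtx d T).

Definition par_j (j : 'I_d) (v : Vtx) : Vtx :=
  @dfwith _ T v j (@par (T j) (@E j) (root j) (v j)).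

Definition sqmod (z : C) : R := complex.Re z ^+ 2 + complex.Im z ^+ 2.

Definition norm2 (f : Vtx -> C) : \bar R :=
  (\esum_(v in [set: Vtx]) (sqmod (f v))%:E)%E.

Definition l2 (f : Vtx -> C) : Prop := (norm2 f < +oo)%E.

(* sum of an (absolutely summable) real family over Vtx:
   sum of positive parts minus sum of negative parts *)
Definition rsum (u : Vtx -> R) : R :=
  fine (\esum_(v in [set: Vtx]) (Num.max (u v) 0)%:E)%E
  - fine (\esum_(v in [set: Vtx]) (Num.max (- u v) 0)%:E)%E.

Definition csum (u : Vtx -> C) : C :=
  Complex (rsum (fun v => complex.Re (u v))) (rsum (fun v => complex.Im (u v))).

(* inner product of l^2(V), linear in the first variable *)
Definition inner (f g : Vtx -> C) : C := csum (fun v => f v * conjc (g v)).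

Variable lambda : 'I_d -> Vtx -> R.

Definition S (j : 'I_d) (f : Vtx -> C) : Vtx -> C :=
  fun v => if pselect (v j = root j) is left _ then 0
           else ((lambda j v)%:C)%C * f (par_j j v).

Definition Spow (alpha : 'I_d -> nat) (f : Vtx -> C) : Vtx -> C :=
  foldr (fun j g => iter (alpha j) (S j) g) f (enum 'I_d).

Definition bounded_on_l2 (A : (Vtx -> C) -> Vtx -> C) : Prop :=
  exists M : R, forall f, l2 f -> (norm2 (A f) <= M%:E * norm2 f)%E.

(* ker S_j^* = { f in l^2 : S_j^* f = 0 }
             = { f in l^2 : <g, S_j^* f> = <S_j g, f> = 0 for all g in l^2 } *)
Definition ker_adj (j : 'I_d) : set (Vtx -> C) :=
  [set f | l2 f /\ forall g, l2 g -> inner (S j g) f = 0].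

Definition joint_kernel : set (Vtx -> C) :=
  [set f | l2 f /\ forall j, ker_adj j f].

Definition finite_lin_comb (A : set (Vtx -> C)) (h : Vtx -> C) : Prop :=
  exists (n : nat) (c : 'I_n -> C) (a : 'I_n -> Vtx -> C),
    (forall i, A (a i)) /\ h = (fun v => \sum_(i < n) c i * a i v).

Definition closed_span (A : set (Vtx -> C)) : set (Vtx -> C) :=
  [set f | l2 f /\ forall eps : R, 0 < eps ->
     exists h, finite_lin_comb A h /\ (norm2 (fun v => (f v - h v)%R) < eps%:E)%E].

Definition wandering_subspace_property : Prop :=
  [set f | l2 f] =
  closed_span [set h | exists (alpha : 'I_d -> nat) (e : Vtx -> C),
                        joint_kernel e /\ h = Spow alpha e].
End Multishift.

(* Main.v *)
Require Import Defs.
From Stdlib Require Import Relations.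
From HB Require Import structures.
From mathcomp Require Import all_boot all_order all_algebra.
From mathcomp Require Import all_classical all_reals all_analysis.
From mathcomp Require Import complex ring lra.
Set Implicit Arguments. Unset Strict Implicit. Unset Printing Implicit Defensive.
Import Order.TTheory GRing.Theory Num.Theory.
Local Open Scope classical_set_scope.
Local Open Scope ring_scope.


Section TreeFacts.
Variables (T : Type) (E : T -> T -> Prop) (rt : T).
Hypothesis Htree : rooted_directed_tree E rt.
Hypothesis Hlf : locally_finite E.

Fixpoint Dn (n : nat) (u : T) : Prop :=
  match n with 0 => u = rt | n.+1 => exists a, Dn n a /\ E a u end.

Lemma par_uniq u v w : E u w -> E v w -> u = v.
Proof. by case: Htree => _ _ _ H _; apply: H. Qed.

Lemma noE_rt u : ~ E u rt.
Proof. by case: Htree. Qed.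

Lemma Dn_uniq n m u : Dn n u -> Dn m u -> n = m.
Proof.
elim: n m u => [|n IH] [|m] u /=.
- by [].
- by move=> Hu [a [_ Ha]]; rewrite Hu in Ha; case: (noE_rt Ha).
- by move=> [a [_ Ha]] Hu; rewrite Hu in Ha; case: (noE_rt Ha).
- move=> [a [Da Ea]] [b [Db Eb]].
  by rewrite (par_uniq Ea Eb) in Da; rewrite (IH _ _ Da Db).
Qed.

Lemma Dn_ex u : exists n, Dn n u.
Proof.
have P : forall x y, clos_refl_trans T (undirected_edge E) x y ->
   (exists n, Dn n x) -> exists n, Dn n y.
  move=> x y; elim => {x y}.
  - move=> x y [Exy|Eyx] [n Dx].
      by exists n.+1; exists x.
    case: n Dx => [|n] /= Dx.
      by rewrite Dx in Eyx; case: (noE_rt Eyx).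
    case: Dx => a [Da Eax]; rewrite (par_uniq Eyx Eax).
    by exists n.
  - by [].
  - by move=> x y z _ H1 _ H2 /H1 /H2.
case: (pselect (u = rt)) => [->|urt]; first by exists 0%N.
apply: (P rt); last by exists 0%N.
by case: Htree => _ _ H _ _; apply: H => /esym.
Qed.

Definition dep (u : T) : nat := proj1_sig (cid (Dn_ex u)).

Lemma depP u : Dn (dep u) u.
Proof. by rewrite /dep; case: cid. Qed.

Lemma dep_eq n u : Dn n u -> dep u = n.
Proof. by move=> H; apply: Dn_uniq (depP u) H. Qed.

Lemma dep_rt : dep rt = 0%N.
Proof. exact: dep_eq. Qed.

Lemma dep0 u : dep u = 0%N -> u = rt.
Proof. by move=> H; have := depP u; rewrite H. Qed.

Lemma par_child w c : E w c -> par E rt c = w.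
Proof.
move=> Ewc; rewrite /par.
have H := ClassicalEpsilon.epsilon_spec (inhabits rt) (fun p => E p c) (ex_intro _ w Ewc).
exact: par_uniq H Ewc.
Qed.

Lemma child_dep w c : E w c -> dep c = (dep w).+1.
Proof. by move=> Ewc; apply: dep_eq; exists w; split => //; apply: depP. Qed.

Lemma child_neq w c : E w c -> c <> rt.
Proof. by move=> Ewc Hc; rewrite Hc in Ewc; case: (noE_rt Ewc). Qed.

Lemma nonroot u : u <> rt -> E (par E rt u) u /\ dep u = (dep (par E rt u)).+1.
Proof.
move=> urt; have := depP u; case Hd: (dep u) => [|k] /=.
  by move=> Hu; case: urt.
move=> [a [Da Eau]]; rewrite (par_child Eau) (dep_eq Da); split => //.
Qed.

Lemma finite_level n : finite_set [set u | dep u = n].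
Proof.
elim: n => [|n IH].
  apply: (sub_finite_set _ (finite_set1 rt)) => u /= /dep0 ->; done.
apply: (sub_finite_set _ (bigcup_finite IH (fun w _ => Hlf w))).
move=> u /= Hu.
have urt : u <> rt by move=> H; rewrite H dep_rt in Hu.
have [Hp Hd] := nonroot urt.
exists (par E rt u) => //=; by move: Hu; rewrite Hd => -[].
Qed.

End TreeFacts.


Section Levels.
Variables (d : nat) (T : 'I_d -> Type) (E : forall j, T j -> T j -> Prop)
          (root : forall j, T j).
Hypothesis Htree : forall j, rooted_directed_tree (@E j) (root j).
Hypothesis Hlf : forall j, locally_finite (@E j).

Local Notation V := (Vtx T).
Definition level (x : V) : nat := (\sum_(j < d) dep (Htree j) (x j))%N.
Local Notation pj := (par_j E root).

Lemma pj_in j (x : V) : pj j x j = par (@E j) (root j) (x j).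
Proof. exact: dfwith_in. Qed.

Lemma pj_out j k (x : V) : j != k -> pj j x k = x k.
Proof. by move=> H; apply: dfwith_out. Qed.

Lemma level_pj j (x : V) : x j <> root j -> level x = (level (pj j x)).+1.
Proof.
move=> Hx; rewrite /level (bigD1 j) //= [X in _ = X.+1](bigD1 j) //=.
rewrite pj_in (nonroot (Htree j) Hx).2 addSn; congr (_ + _)%N.+1.
by apply: eq_bigr => k /negbTE Hk; rewrite pj_out // eq_sym Hk.
Qed.

Lemma level0 (x : V) : level x = 0%N -> x = root.
Proof.
move=> H; apply: functional_extensionality_dep => j.
apply: (@dep0 _ _ _ (Htree j) (x j)); apply/eqP; rewrite -leqn0 -H /level.
by rewrite (bigD1 j) //= leq_addr.
Qed.

Lemma level_nonroot (x : V) n : level x = n.+1 -> exists j, x j <> root j.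
Proof.
move=> H; apply: contrapT => Hn.
suff : x = root by move=> Hr; rewrite Hr in H; move: H; rewrite /level big1 // => j _; rewrite dep_rt.
apply: functional_extensionality_dep => j; apply: contrapT => Hj; apply: Hn; by exists j.
Qed.

Lemma dfwith_pj j (x : V) : @dfwith _ T (pj j x) j (x j) = x.
Proof.
apply: functional_extensionality_dep => k.
case: dfwithP => [//|k' Hk]; by rewrite pj_out.
Qed.

Lemma finite_lev n : finite_set [set x : V | level x = n].
Proof.
elim: n => [|n IH].
  by apply: (sub_finite_set _ (finite_set1 (root : V))) => x /= /level0.
have F : finite_set (\bigcup_(j in [set: 'I_d]) \bigcup_(w in [set x : V | level x = n])
     ((fun c => @dfwith _ T w j c) @` (Chi (@E j) (w j)))).
  apply: bigcup_finite => // j _; apply: bigcup_finite => // w _.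
  exact/finite_image/Hlf.
apply: (sub_finite_set _ F) => x /= Hx.
have [j Hj] := level_nonroot Hx.
exists j => //; exists (pj j x) => /=.
  by move: Hx; rewrite (level_pj Hj) => -[].
exists (x j); last exact: dfwith_pj.
by rewrite /Chi /= pj_in; exact: (nonroot (Htree j) Hj).1.
Qed.

End Levels.


Fixpoint Lin {A : Type} (a : A) (l : seq A) : Prop :=
  match l with nil => False | b :: l => b = a \/ Lin a l end.

Lemma Lin_app {A : Type} (a : A) l1 l2 : Lin a (l1 ++ l2) <-> Lin a l1 \/ Lin a l2.
Proof.
elim: l1 => [|b l1 IH] /=; first by split => [|[]//]; right.
rewrite IH; split => [[->|[]]|[[]|]]; tauto.
Qed.

Lemma Lin_map {A B : Type} (f : A -> B) (b : B) l :
  Lin b (map f l) -> exists a, f a = b /\ Lin a l.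
Proof.
elim: l => [|a l IH] //= [<-|/IH [a' [H1 H2]]]; first by exists a; split => //; left.
by exists a'; split => //; right.
Qed.

Section Lin.
Variables (R : realType) (V : choiceType).
Local Notation C := R[i].

Definition ip (s : seq V) (f g : V -> C) : C := \sum_(x <- s) f x * conjc (g x).
Definition lc (l : seq (C * (V -> C))) : V -> C := fun v => \sum_(a <- l) a.1 * a.2 v.

Lemma ip_ext s f1 f2 g1 g2 : (forall v, f1 v = f2 v) -> (forall v, g1 v = g2 v) ->
  ip s f1 g1 = ip s f2 g2.
Proof. by move=> H1 H2; apply: eq_bigr => v _; rewrite H1 H2. Qed.

Lemma ipBl s f g h : ip s (fun v => f v - g v) h = ip s f h - ip s g h.
Proof. by rewrite /ip -sumrB; apply: eq_bigr => v _; rewrite mulrBl. Qed.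

Lemma ipZl s c f h : ip s (fun v => c * f v) h = c * ip s f h.
Proof. by rewrite /ip mulr_sumr; apply: eq_bigr => v _; rewrite mulrA. Qed.

Lemma ipDr s f g h : ip s f (fun v => g v + h v) = ip s f g + ip s f h.
Proof. by rewrite /ip -big_split; apply: eq_bigr => v _; rewrite rmorphD mulrDr. Qed.

Lemma ip_lc_r s f l : ip s f (lc l) = \sum_(a <- l) conjc a.1 * ip s f a.2.
Proof.
rewrite /ip /lc.
transitivity (\sum_(v <- s) \sum_(a <- l) conjc a.1 * (f v * conjc (a.2 v))).
  apply: eq_bigr => v _; rewrite rmorph_sum mulr_sumr; apply: eq_bigr => a _.
  by rewrite rmorphM mulrCA.
by rewrite exchange_big; apply: eq_bigr => a _; rewrite mulr_sumr.
Qed.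

Lemma lc_cat l1 l2 v : lc (l1 ++ l2) v = lc l1 v + lc l2 v.
Proof. by rewrite /lc big_cat. Qed.

Lemma lc_cons a l v : lc (a :: l) v = a.1 * a.2 v + lc l v.
Proof. by rewrite /lc big_cons. Qed.

Lemma lc_scale c l v : lc [seq (c * a.1, a.2) | a <- l] v = c * lc l v.
Proof. by rewrite /lc big_map mulr_sumr; apply: eq_bigr => a _; rewrite mulrA. Qed.

Lemma ip_self0 s w : ip s w w = 0 -> forall v, v \in s -> w v = 0.
Proof.
move=> H v vs.
have ge0 : forall x, 0 <= w x * conjc (w x) by move=> x; exact: mulcJ_ge0.
move/eqP: H; rewrite /ip psumr_eq0; last by move=> x _; exact: ge0.
move/allP => /(_ v vs) /=; rewrite mulf_eq0 => /orP[/eqP //|/eqP H].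
by rewrite -(conjcK (w v)) H conjc0.
Qed.

Lemma ip_self0_r s w f : ip s w w = 0 -> ip s f w = 0.
Proof.
move=> /ip_self0 H; rewrite /ip big_seq big1 // => v /H ->.
by rewrite conjc0 mulr0.
Qed.

Lemma big_In0 (l : seq (C * (V -> C))) (F : C * (V -> C) -> C) :
  (forall a, Lin a l -> F a = 0) -> \sum_(a <- l) F a = 0.
Proof.
elim: l => [|a l IH] H; first by rewrite big_nil.
rewrite big_cons H /=; last by left.
by rewrite add0r IH // => b Hb; apply: H; right.
Qed.

Lemma GS (s : seq V) (ws : seq (V -> C)) (x : V -> C) :
  exists l : seq (C * (V -> C))%type, (forall a, Lin a l -> Lin a.2 ws) /\
    forall u, Lin u ws -> ip s (fun v => x v - lc l v) u = 0.
Proof.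
elim: ws x => [|w ws IH] x.
  by exists [::]; split => // a [].
have [l1 [H1l H1o]] := IH x; have [l2 [H2l H2o]] := IH w.
pose w' := fun v => w v - lc l2 v.
pose c := ip s (fun v => x v - lc l1 v) w' / ip s w' w'.
exists (l1 ++ (c, w) :: [seq (- c * a.1, a.2) | a <- l2]).
have Elc : forall v, x v - lc (l1 ++ (c, w) :: [seq (- c * a.1, a.2) | a <- l2]) v
    = (x v - lc l1 v) - c * w' v.
  move=> v; rewrite lc_cat lc_cons lc_scale /= /w'; ring.
have Hws : forall u, Lin u ws ->
    ip s (fun v => x v - lc (l1 ++ (c, w) :: [seq (- c * a.1, a.2) | a <- l2]) v) u = 0.
  move=> u Hu; rewrite (ip_ext _ Elc (fun _ => erefl)) ipBl ipZl H1o //.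
  by rewrite /w' H2o // mulr0 subr0.
split.
  move=> a; rewrite Lin_app /= => -[/H1l Ha|[<-|]]; [by right|by left|].
  move=> Hm; have [b [Eb Hb]] := Lin_map Hm; rewrite -Eb /=; right; exact: H2l.
move=> u /= [<-|Hu]; last exact: Hws.
have Ew : forall v, w v = w' v + lc l2 v by move=> v; rewrite /w' subrK.
rewrite (ip_ext _ (fun _ => erefl) Ew) ipDr ip_lc_r big_In0 ?addr0; last first.
  by move=> a Ha; rewrite Hws ?mulr0 //; apply: H2l.
have [H0|H0] := eqVneq (ip s w' w') 0; first exact: ip_self0_r.
rewrite (ip_ext _ Elc (fun _ => erefl)) ipBl ipZl /c divfK //.
by rewrite subrr.
Qed.
End Lin.


Lemma esum_fin (R : realType) (V : choiceType) (a : V -> R) (s : seq V) :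
  uniq s -> (forall v, 0 <= a v) -> (forall v, v \notin s -> a v = 0) ->
  (\esum_(v in [set: V]) (a v)%:E)%E = (\sum_(v <- s) a v)%:E.
Proof.
move=> us a0 a1.
rewrite (esumID [set` s]); last by move=> i _; rewrite lee_fin.
rewrite [X in (_ + X)%E]esum1 ?adde0; last first.
  by move=> i [_ /= Hi]; rewrite a1 //; apply/negP.
rewrite setTI esum_fset //; last by move=> i _; rewrite lee_fin.
by rewrite -fsbig_seq // sumEFin.
Qed.

Section Fin.
Variables (R : realType) (d : nat) (T : 'I_d -> Type).
Local Notation V := (Vtx T).
Local Notation C := R[i].

Lemma maxsub (x : R) : Num.max x 0 - Num.max (- x) 0 = x.
Proof.
rewrite !maxEle oppr_le0; case: (lerP x 0) => H1; case: (lerP 0 x) => H2 //=.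
- by rewrite subr0; apply/eqP; rewrite eq_le H1 H2.
- by rewrite sub0r opprK.
- by rewrite subr0.
- by move: (lt_trans H1 H2); rewrite ltxx.
Qed.

Lemma rsum_fin (u : V -> R) (s : seq V) : uniq s -> (forall v, v \notin s -> u v = 0) ->
  rsum u = \sum_(v <- s) u v.
Proof.
move=> us u0; rewrite /rsum.
rewrite (@esum_fin _ _ (fun v => Num.max (u v) 0) s) //; last 2 first.
- by move=> v; rewrite le_max lexx orbT.
- by move=> v /u0 ->; rewrite maxxx.
rewrite (@esum_fin _ _ (fun v => Num.max (- u v) 0) s) //; last 2 first.
- by move=> v; rewrite le_max lexx orbT.
- by move=> v /u0 ->; rewrite oppr0 maxxx.
by rewrite /= -sumrB; apply: eq_bigr => v _; rewrite maxsub.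
Qed.

Lemma sum_complex (s : seq V) (u : V -> C) :
  \sum_(v <- s) u v = Complex (\sum_(v <- s) complex.Re (u v)) (\sum_(v <- s) complex.Im (u v)).
Proof.
elim: s => [|a s IH]; first by rewrite !big_nil.
by rewrite !big_cons IH; case: (u a).
Qed.

Lemma csum_fin (u : V -> C) (s : seq V) : uniq s -> (forall v, v \notin s -> u v = 0) ->
  csum u = \sum_(v <- s) u v.
Proof.
move=> us u0; rewrite /csum sum_complex.
by rewrite (rsum_fin us) ?(rsum_fin us) // => v /u0 ->.
Qed.

Lemma inner_fin (f g : V -> C) (s : seq V) : uniq s -> (forall v, v \notin s -> g v = 0) ->
  inner f g = ip s f g.
Proof.
by move=> us g0; rewrite /inner (csum_fin us) // => v /g0 ->; rewrite conjc0 mulr0.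
Qed.

Lemma sqmod_ge0 (z : C) : 0 <= sqmod z.
Proof. by rewrite /sqmod addr_ge0 // sqr_ge0. Qed.

Lemma norm2_fin (f : V -> C) (s : seq V) : uniq s -> (forall v, v \notin s -> f v = 0) ->
  norm2 f = (\sum_(v <- s) sqmod (f v))%:E.
Proof.
move=> us f0; rewrite /norm2 (esum_fin us) //; first by move=> v; exact: sqmod_ge0.
by move=> v /f0 ->; rewrite /sqmod /= expr0n /= addr0.
Qed.

Lemma l2_fin (f : V -> C) (s : seq V) : uniq s -> (forall v, v \notin s -> f v = 0) -> l2 f.
Proof. by move=> us f0; rewrite /l2 (norm2_fin us f0) ltry. Qed.

Lemma ereal_aux (r e : R) (y a : \bar R) : (0 <= y)%E -> (0 <= a)%E -> (y + a = r%:E)%E ->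
  ((r - e)%:E < y)%E -> (a < e%:E)%E.
Proof.
case: y => [y||]; case: a => [a||] //=.
move=> _ _ [<-]; rewrite !lte_fin => H; lra.
Qed.

Lemma approx (f : V -> C) (eps : R) : l2 f -> 0 < eps ->
  exists s : seq V, uniq s /\
    (norm2 (fun v => (f v - (if v \in s then f v else 0))%R) < eps%:E)%E.
Proof.
move=> lf ep.
have nf0 : (0 <= norm2 f)%E by apply: esum_ge0 => v _; rewrite lee_fin sqmod_ge0.
have fin : norm2 f \is a fin_num by rewrite ge0_fin_numE.
have Er : norm2 f = (fine (norm2 f))%:E by rewrite fineK.
have : ((fine (norm2 f) - eps)%:E < norm2 f)%E.
  by rewrite [X in (_ < X)%E]Er lte_fin ltrBlDr ltrDl.
rewrite {2}/norm2 /esum => /ereal_sup_gt [y [X [finX _]] <-] Hy.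
have [s0 Xs0] := (finite_seqP X).1 finX.
exists (undup s0); split; first exact: undup_uniq.
have XE : X = [set` undup s0] by rewrite Xs0; apply/seteqP; split => v /=; rewrite mem_undup.
rewrite /norm2 (esumID X); last by move=> i _; rewrite lee_fin sqmod_ge0.
rewrite esum1 ?add0e; last first.
  move=> v [_ Xv]; have -> : v \in undup s0 by move: Xv; rewrite XE.
  by rewrite subrr /sqmod /= expr0n /= addr0.
have E2 : (\esum_(i in [set: V] `&` ~` X) (sqmod (f i - (if i \in undup s0 then f i else 0))%R)%:E
   = \esum_(i in [set: V] `&` ~` X) (sqmod (f i))%:E)%E.
  apply: eq_esum => v [_ Xv].
  have -> : (v \in undup s0) = false.
    by apply/negbTE/negP => H; apply: Xv; rewrite XE /=.
  by rewrite subr0.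
rewrite E2; apply: (ereal_aux (r := fine (norm2 f)) (y := (\sum_(x \in X) (sqmod (f x))%:E)%E)).
- by apply: fsume_ge0 => v _; rewrite lee_fin sqmod_ge0.
- by apply: esum_ge0 => v _; rewrite lee_fin sqmod_ge0.
- rewrite -Er /norm2 [RHS](esumID X); last by move=> i _; rewrite lee_fin sqmod_ge0.
  congr (_ + _)%E.
  rewrite setTI esum_fset //; by move=> i _; rewrite lee_fin sqmod_ge0.
- exact: Hy.
Qed.
End Fin.


Section Ops.
Variables (R : realType) (d : nat) (T : 'I_d -> Type) (E : forall j, T j -> T j -> Prop)
          (root : forall j, T j) (lambda : 'I_d -> Vtx T -> R).
Local Notation V := (Vtx T).
Local Notation C := R[i].
Local Notation Sj := (@S R d T E root lambda).
Hypothesis Hbd : forall j, bounded_on_l2 (Sj j).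
Hypothesis Hcomm : forall (k j : 'I_d) (f : V -> C), l2 f -> Sj k (Sj j f) = Sj j (Sj k f).

Lemma l2S j f : l2 f -> l2 (Sj j f).
Proof.
move=> lf; have [M HM] := Hbd j.
have nf0 : (0 <= norm2 f)%E by apply: esum_ge0 => v _; rewrite lee_fin sqmod_ge0.
have fin : norm2 f \is a fin_num by rewrite ge0_fin_numE.
rewrite /l2; apply: (le_lt_trans (HM f lf)).
by rewrite -(fineK fin) -EFinM ltry.
Qed.

Lemma l2iter j n f : l2 f -> l2 (iter n (Sj j) f).
Proof. by move=> lf; elim: n => //= n IH; apply: l2S. Qed.

Lemma comm_iter k j n g : l2 g -> Sj k (iter n (Sj j) g) = iter n (Sj j) (Sj k g).
Proof.
move=> lg; elim: n => //= n IH.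
by rewrite Hcomm ?IH //; apply: l2iter.
Qed.

Definition Fo (l : seq 'I_d) (alpha : 'I_d -> nat) (f : V -> C) :=
  foldr (fun j g => iter (alpha j) (Sj j) g) f l.

Lemma Fo_l2 l alpha f : l2 f -> l2 (Fo l alpha f).
Proof. by move=> lf; elim: l => //= j l IH; apply: l2iter. Qed.

Lemma Fo_ext l alpha beta f : (forall j, j \in l -> alpha j = beta j) ->
  Fo l alpha f = Fo l beta f.
Proof.
elim: l => //= j l IH H; rewrite H ?mem_head // IH // => i Hi.
by apply: H; rewrite in_cons Hi orbT.
Qed.

Lemma Fo_out k l alpha f : k \notin l -> l2 f -> Sj k (Fo l alpha f) = Fo l alpha (Sj k f).
Proof.
move=> + lf; elim: l => //= j l IH; rewrite in_cons negb_or => /andP[_ Hk].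
by rewrite comm_iter ?IH //; apply: Fo_l2.
Qed.

Definition incr (alpha : 'I_d -> nat) (k : 'I_d) : 'I_d -> nat :=
  fun i => if i == k then (alpha i).+1 else alpha i.

Lemma Fo_in k l alpha f : k \in l -> uniq l -> l2 f ->
  Sj k (Fo l alpha f) = Fo l (incr alpha k) f.
Proof.
move=> + + lf; elim: l => //= j l IH; rewrite in_cons => /orP[/eqP Hk|Hk] /andP[jl ul].
  subst j.
  have -> : Fo l (incr alpha k) f = Fo l alpha f.
    apply: Fo_ext => i Hi; rewrite /incr ifF //; apply/negbTE.
    by apply: contraNneq jl => <-.
  by rewrite /incr eqxx.
have jk : j != k by apply: contraNneq jl => ->.
rewrite comm_iter; last exact: Fo_l2.
rewrite IH // /incr ifF //; exact/negbTE.
Qed.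

Lemma Spow_S k alpha f : l2 f -> Sj k (Spow E root lambda alpha f) = Spow E root lambda (incr alpha k) f.
Proof. move=> lf; exact: (Fo_in (l := enum 'I_d)) (mem_enum _ k) (enum_uniq _) lf. Qed.

Lemma Spow0 f : Spow E root lambda (fun _ => 0%N) f = f.
Proof. by rewrite /Spow; elim: (enum 'I_d) => //= j l ->. Qed.

Lemma Spow_l2 alpha f : l2 f -> l2 (Spow E root lambda alpha f).
Proof. exact: Fo_l2. Qed.

Lemma S_lc j (l : seq (C * (V -> C))%type) :
  Sj j (lc l) = lc [seq (a.1, Sj j a.2) | a <- l].
Proof.
apply: funext => v; rewrite /S /lc big_map /=.
case: pselect => H; first by rewrite big1 // => a _; rewrite mulr0.
by rewrite mulr_sumr; apply: eq_bigr => a _; rewrite mulrCA.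
Qed.

End Ops.


Lemma Lin_mem (A : eqType) (x : A) l : Lin x l -> x \in l.
Proof. elim: l => //= a l IH [->|/IH H]; by rewrite in_cons ?eqxx ?H ?orbT. Qed.

Lemma mem_Lin (A : eqType) (x : A) l : x \in l -> Lin x l.
Proof. elim: l => //= a l IH; rewrite in_cons => /orP[/eqP ->|/IH]; by [left|right]. Qed.

Lemma Lin_pairs1 (A B : eqType) (U : Type) (f : A -> B -> U) js ws u :
  Lin u [seq f j w | j <- js, w <- ws] -> exists j w, w \in ws /\ u = f j w.
Proof.
elim: js => //= j js IH; rewrite Lin_app => -[H|/IH //].
have [w [<- Hw]] := Lin_map H; exists j, w; split => //; exact: Lin_mem.
Qed.

Lemma Lin_pairs2 (A B : eqType) (U : Type) (f : A -> B -> U) js ws j w :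
  j \in js -> w \in ws -> Lin (f j w) [seq f j w | j <- js, w <- ws].
Proof.
elim: js => //= j' js IH; rewrite in_cons Lin_app => /orP[/eqP <-|/IH H] Hw; last by right; apply: H.
left; elim: ws Hw {IH} => //= w' ws IH; rewrite in_cons => /orP[/eqP ->|/IH]; by [left|right].
Qed.

Lemma Lin_nth (A : Type) (x0 : A) l i : (i < size l)%N -> Lin (nth x0 l i) l.
Proof. elim: l i => //= a l IH [|i] /=; [by left|by move=> /IH; right]. Qed.

Section Main.
Variables (R : realType) (d : nat) (T : 'I_d -> Type) (E : forall j, T j -> T j -> Prop)
          (root : forall j, T j) (lambda : 'I_d -> Vtx T -> R).
Local Notation V := (Vtx T).
Local Notation C := R[i].
Local Notation Sj := (@S R d T E root lambda).
Hypothesis Htree : forall j, rooted_directed_tree (@E j) (root j).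
Hypothesis Hlf : forall j, locally_finite (@E j).
Hypothesis Hbd : forall j, bounded_on_l2 (Sj j).
Hypothesis Hcomm : forall (k j : 'I_d) (f : V -> C), l2 f -> Sj k (Sj j f) = Sj j (Sj k f).

Definition ind (w : V) : V -> C := fun v => if v == w then 1 else 0.
Definition T0 : set (V -> C) := [set h | exists (alpha : 'I_d -> nat) (e : V -> C),
   joint_kernel E root lambda e /\ h = Spow E root lambda alpha e].
Definition lspan (A : set (V -> C)) (h : V -> C) :=
  exists l : seq (C * (V -> C))%type, (forall a, Lin a l -> A a.2) /\ h = lc l.

Lemma lspan_lc A (l : seq (C * (V -> C))%type) :
  (forall a, Lin a l -> lspan A a.2) -> lspan A (lc l).
Proof.
elim: l => [|a l IH] H.
  by exists [::]; split.
have [la [Hla Ea]] := H a (or_introl erefl).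
have [lb [Hlb Eb]] : lspan A (lc l) by apply: IH => b Hb; apply: H; right.
exists ([seq (a.1 * b.1, b.2) | b <- la] ++ lb); split.
  move=> b; rewrite Lin_app => -[Hb|/Hlb //].
  have [b' [Eb' Hb']] := Lin_map Hb; rewrite -Eb' /=; exact: Hla.
apply: funext => v; rewrite lc_cons lc_cat lc_scale Ea -Eb.
by [].
Qed.

Lemma lspan_sub A h : A h -> lspan A h.
Proof.
move=> Ah; exists [:: (1, h)]; split; first by move=> a [<-|].
by apply: funext => v; rewrite lc_cons /lc big_nil addr0 mul1r.
Qed.

Lemma T0_S j h : T0 h -> T0 (Sj j h).
Proof.
move=> [alpha [e [He ->]]]; exists (incr alpha j), e; split => //.
by rewrite Spow_S //; case: He.
Qed.

Lemma lspan_S j h : lspan T0 h -> lspan T0 (Sj j h).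
Proof.
move=> [l [Hl ->]]; rewrite S_lc; apply: lspan_lc => a Ha.
have [b [Eb Hb]] := Lin_map Ha; rewrite -Eb /=; apply: lspan_sub; apply: T0_S; exact: Hl.
Qed.

Lemma sum_ind (s : seq V) (F : V -> C) y : uniq s ->
  \sum_(w <- s) F w * ind w y = if y \in s then F y else 0.
Proof.
elim: s => [|a s IH]; first by rewrite big_nil.
rewrite big_cons /= => /andP[as_ us]; rewrite IH // in_cons /ind.
have [->|ya] := eqVneq y a; last by rewrite mulr0 add0r.
by rewrite (negbTE as_) mulr1 addr0.
Qed.


Lemma step (s : seq V) (ws : seq (V -> C)) v : uniq s -> v \in s ->
  (forall u, Lin u ws -> lspan T0 u) ->
  (forall u, Lin u ws -> forall x, x \notin s -> u x = 0) ->
  (forall r, (forall u, Lin u ws -> ip s r u = 0) -> forall j g, l2 g -> ip s (Sj j g) r = 0) ->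
  lspan T0 (ind v).
Proof.
move=> us vs Hsp Hsupp Hort.
have [l [Hl Ho]] := GS s ws (ind v).
pose r := fun x => ind v x - lc l x.
have r0 : forall x, x \notin s -> r x = 0.
  move=> x xs; rewrite /r /ind ifF; last first.
    by apply/negbTE; apply: contraNneq xs => ->.
  rewrite /lc big_In0 ?subr0 // => a Ha; rewrite Hsupp ?mulr0 //; exact: Hl.
have lr : l2 r := l2_fin us r0.
have Jr : joint_kernel E root lambda r.
  split => // j; split => // g lg.
  rewrite (inner_fin _ us r0); exact: Hort.
have -> : ind v = lc ((1, r) :: l).
  by apply: funext => x; rewrite lc_cons /= mul1r /r subrK.
apply: lspan_lc => a /= [<-|Ha] /=.
  by apply: lspan_sub; exists (fun _ => 0%N), r; split => //; rewrite Spow0.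
by apply: Hsp; apply: Hl.
Qed.

Lemma lev_list n : exists s : seq V, uniq s /\ forall x, (x \in s) = (level Htree x == n).
Proof.
have [s0 Hs0] := (finite_seqP _).1 (finite_lev Htree Hlf n).
exists (undup s0); split; first exact: undup_uniq.
move=> x; rewrite mem_undup; apply/idP/eqP => H.
  by have : [set` s0] x by []; rewrite -Hs0.
by have : [set x | level Htree x = n] x by []; rewrite Hs0.
Qed.

Lemma pj_level (x : V) j : x j <> root j ->
  level Htree x = (level Htree (par_j E root j x)).+1.
Proof. exact: level_pj. Qed.

Lemma S_ind_supp j w x : Sj j (ind w) x != 0 ->
  x j <> root j /\ level Htree x = (level Htree w).+1.
Proof.
rewrite /S; case: pselect => H; first by rewrite eqxx.
rewrite /ind.
case: ifP => [/eqP Hw _|_]; last by rewrite mulr0 eqxx.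
by split => //; rewrite -Hw; apply: pj_level.
Qed.

Lemma all_ind n : forall v, level Htree v = n -> lspan T0 (ind v).
Proof.
elim: n => [|m IH] v Hv.
  have [s [us Hs]] := lev_list 0.
  apply: (@step s [::]) => //; first by rewrite Hs Hv.
  move=> r _ j g lg; rewrite /ip big_seq big1 // => x.
  rewrite Hs => /eqP /level0 Hx; rewrite /S; case: pselect => H; first by rewrite mul0r.
  by case: H; rewrite Hx.
have [s [us Hs]] := lev_list m.+1.
have [sm [usm Hsm]] := lev_list m.
apply: (@step s [seq Sj j (ind w) | j <- enum 'I_d, w <- sm]) => //.
- by rewrite Hs Hv.
- move=> u Hu; have [j [w [Hw ->]]] := Lin_pairs1 Hu; apply: lspan_S; apply: IH.
  by apply/eqP; rewrite -Hsm.
- move=> u Hu x xs; have [j [w [Hw Eu]]] := Lin_pairs1 Hu; rewrite Eu; apply/eqP; apply: contraNT xs.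
  move=> /S_ind_supp [_ Hx]; rewrite Hs Hx; move: Hw; rewrite Hsm => /eqP ->; done.
move=> r Hr j g lg.
have dec : forall x, x \in s -> Sj j g x = \sum_(w <- sm) g w * Sj j (ind w) x.
  move=> x xs; rewrite /S; case: pselect => H.
    by rewrite big1 // => w _; rewrite mulr0.
  transitivity ((lambda j x)%:C%C * \sum_(w <- sm) g w * ind w (par_j E root j x)).
    rewrite sum_ind // ifT //; rewrite Hsm.
    by move: xs; rewrite Hs (pj_level H) eqSS.
  by rewrite mulr_sumr; apply: eq_bigr => w _; rewrite mulrCA.
rewrite /ip (eq_big_seq (fun x => \sum_(w <- sm) g w * (Sj j (ind w) x * conjc (r x)))); last first.
  by move=> x xs; rewrite dec // mulr_suml; apply: eq_bigr => w _; rewrite mulrA.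
rewrite exchange_big big_seq big1 // => w Hw; rewrite -mulr_sumr.
have -> : \sum_(x <- s) Sj j (ind w) x * conjc (r x) = conjc (ip s r (Sj j (ind w))).
  rewrite /ip rmorph_sum; apply: eq_bigr => x _; by rewrite rmorphM /= conjcK mulrC.
rewrite Hr ?conjc0 ?mulr0 //.
exact: (Lin_pairs2 (fun j w => Sj j (ind w))) (mem_enum _ j) Hw.
Qed.

End Main.

Unset Implicit Arguments.

Theorem mainTheorem1 (R : realType) (d : nat) (T : 'I_d -> Type)
    (E : forall j : 'I_d, T j -> T j -> Prop) (root : forall j : 'I_d, T j)
    (lambda : 'I_d -> Vtx T -> R) :
  (* each T_j is a rooted directed tree with root root_j, locally finite
     and leafless *)
  (forall j, rooted_directed_tree (@E j) (root j)) ->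
  (forall j, locally_finite (@E j)) ->
  (forall j, leafless (@E j)) ->
  (* V is countably infinite *)
  (exists e : nat -> Vtx T, bijective e) ->
  (* positive weights on V° *)
  (forall (j : 'I_d) (v : Vtx T), v <> (root : Vtx T) -> 0 < lambda j v) ->
  (* each S_j is bounded on l^2(V) *)
  (forall j, bounded_on_l2 (@S R d T E root lambda j)) ->
  (* S_lambda is commuting *)
  (forall (k j : 'I_d) (f : Vtx T -> R[i]), l2 f ->
     @S R d T E root lambda k (@S R d T E root lambda j f)
     = @S R d T E root lambda j (@S R d T E root lambda k f)) ->
  (* wandering subspace property *)
  @wandering_subspace_property R d T E root lambda.
Proof.
move=> Htree Hlf _ _ _ Hbd Hcomm.
rewrite /wandering_subspace_property; apply/seteqP; split => f /=; last by case.
move=> lf; split => // eps ep.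
have [s [us Hs]] := approx lf ep.
exists (lc [seq (f w, ind R w) | w <- s]); split.
  have [l [Hl El]] : lspan (T0 E root lambda) (lc [seq (f w, ind R w) | w <- s]).
    apply: lspan_lc => a Ha; have [w [Ew _]] := Lin_map Ha; rewrite -Ew /=.
    exact: (@all_ind R d T E root lambda Htree Hlf Hbd Hcomm _ w (erefl _)).
  exists (size l), (fun i => (nth (0, fun _ => 0) l i).1), (fun i => (nth (0, fun _ => 0) l i).2).
  split.
    by move=> i; apply: Hl; apply: Lin_nth.
  by apply: funext => v; rewrite El /lc (big_nth (0, fun _ => 0)) big_mkord.
suff -> : (fun v => f v - lc [seq (f w, ind R w) | w <- s] v)
        = (fun v => (f v - (if v \in s then f v else 0))%R) by [].
by apply: funext => v; rewrite /lc big_map /= sum_ind.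
Qed.
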